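(* Let $R$ be a finite commutative local Frobenius ring with residue field $\mathbb{F}_q$, and let $\ell$ be a nonnegative integer. For $i=1,2$, let $C_i$ be a linear code of length $n$ over $R$ with generator matrix $\mathrm{G}_i$ and parity check matrix $\mathrm{H}_i$. Then $\{C_1,C_2\}$ is an $\ell$-DLIP if and only if $\texttt{Rank}_q(\mathrm{H}_2\mathrm{G}_1^\top)=\texttt{Rank}_q(\mathrm{G}_1)-\ell$ or $\texttt{Rank}_q(\mathrm{H}_1\mathrm{G}_2^\top)=\texttt{Rank}_q(\mathrm{G}_2)-\ell$.
   Context: A linear code of length $n$ over $R$ is an $R$-submodule of $R^n$; $\dim(C):=\log_q|C|$. A pair $\{C,D\}$ of linear codes is an $\ell$-DLIP ($\ell$-dimension linear intersection pair) if $\dim(C\cap D)=\ell$. A generator matrix of $C$ is a matrix whose rows generate $C$; a parity check matrix of $C$ is a generator matrix of $C^\perp$ with respect to the standard inner product $\sum_j u_jc_j$. For a matrix $\mathrm{A}$ over $R$, $\texttt{Rank}_q(\mathrm{A}):=\log_q|M|$ where $M$ is the $R$-submodule spanned by the rows of $\mathrm{A}$. *)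

(* Defs.v *)
From Stdlib Require Import Reals.
From mathcomp Require Import all_boot all_order all_algebra.
Set Implicit Arguments. Unset Strict Implicit. Unset Printing Implicit Defensive.
Import GRing.Theory.
Local Open Scope ring_scope.

Section Defs.
Variable R : finComUnitRingType.

Definition is_ideal (I : {set R}) : Prop :=
  0 \in I /\ (forall x y, x \in I -> y \in I -> x + y \in I)
  /\ (forall r x, x \in I -> r * x \in I).

Definition is_maximal_ideal (M : {set R}) : Prop :=
  is_ideal M /\ M != setT /\
  (forall J, is_ideal J -> M \subset J -> J = M \/ J = setT).

Definition local_with (M : {set R}) : Prop :=
  forall J, is_maximal_ideal J <-> J = M.

Definition ann (S : {set R}) : {set R} := [set r | [forall x in S, r * x == 0]].

Definition is_minimal_ideal (I : {set R}) : Prop :=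
  is_ideal I /\ I != [set 0] /\
  (forall J, is_ideal J -> J \subset I -> J = [set 0] \/ J = I).

(* A finite commutative local ring with maximal ideal M is Frobenius iff its
   socle soc(R) = ann(M) is isomorphic to R/M, i.e. is a simple module,
   i.e. a minimal ideal. *)
Definition local_frobenius (M : {set R}) : Prop :=
  local_with M /\ is_minimal_ideal (ann M).

Definition is_linear_code n (C : {set 'rV[R]_n}) : Prop :=
  0 \in C /\ (forall x y, x \in C -> y \in C -> x + y \in C)
  /\ (forall r x, x \in C -> r *: x \in C).

Definition rowspan k n (A : 'M[R]_(k, n)) : {set 'rV[R]_n} :=
  [set u *m A | u : 'rV[R]_k].

Definition dual_code n (C : {set 'rV[R]_n}) : {set 'rV[R]_n} :=
  [set u : 'rV[R]_n | [forall c in C, (\sum_(j < n) u 0 j * c 0 j) == 0]].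

Definition is_generator_matrix k n (G : 'M[R]_(k, n)) (C : {set 'rV[R]_n}) :=
  rowspan G = C.

Definition is_parity_check_matrix k n (H : 'M[R]_(k, n)) (C : {set 'rV[R]_n}) :=
  rowspan H = dual_code C.

Definition logq (q : nat) (m : nat) : Rdefinitions.R :=
  Rdiv (Rpower.ln (INR m)) (Rpower.ln (INR q)).

Definition dimq (q : nat) n (C : {set 'rV[R]_n}) : Rdefinitions.R := logq q #|C|.

Definition Rankq (q : nat) k n (A : 'M[R]_(k, n)) : Rdefinitions.R :=
  logq q #|rowspan A|.

Definition DLIP (q : nat) n (l : nat) (C D : {set 'rV[R]_n}) : Prop :=
  dimq q (C :&: D) = INR l.

End Defs.

(* Main.v *)
Require Import Defs.
From Stdlib Require Import Classical Reals Lra.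
From mathcomp Require Import all_boot all_order all_algebra zify.
Import GRing.Theory.
Local Open Scope ring_scope.

Lemma card_fib (T U : finType) (D : {set T}) (f : T -> U) k :
  (forall x, x \in D -> #|[set y in D | f y == f x]| = k) -> #|D| = (#|f @: D| * k)%N.
Proof.
move=> hk; rewrite -sum1_card (partition_big_imset f) /= -sum_nat_const.
apply: eq_bigr => u /imsetP [x xD ->].
rewrite -(hk x xD) -sum1_card; apply: eq_bigl => y; by rewrite inE.
Qed.

Lemma card_ker (V : finZmodType) (U : finType) (D K : {set V}) (f : V -> U) :
  (forall x y, x \in D -> y \in D -> x + y \in D) -> K \subset D ->
  (forall x y, x \in D -> y \in D -> (f y == f x) = (y - x \in K)) ->
  #|D| = (#|f @: D| * #|K|)%N.
Proof.
move=> hD hKD hf; apply: card_fib => x xD.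
have -> : [set y in D | f y == f x] = (fun z => z + x) @: K.
  apply/setP => y; rewrite inE; apply/andP/imsetP.
  - by move=> [yD]; rewrite hf // => yK; exists (y - x) => //; rewrite subrK.
  - move=> [z zK ->]; have zD := subsetP hKD z zK.
    by split; [apply: hD | rewrite hf ?addrK //; apply: hD].
by apply: card_imset => a b /addIr.
Qed.

Section RingFacts.
Variable R : finComUnitRingType.
Variable M : {set R}.
Hypothesis hF : local_frobenius M.

Lemma ideal1T (I : {set R}) : is_ideal I -> 1 \in I -> I = setT.
Proof.
move=> [_ [_ hm]] h1; apply/setP => r; rewrite inE.
by rewrite -(mulr1 r); apply: hm.
Qed.

Lemma M_max : is_maximal_ideal M.
Proof. by apply/(hF.1 M).2. Qed.

Lemma one_notin_M : 1 \notin M.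
Proof.
apply/negP => h1; have [hI [hT _]] := M_max.
by move/negP: hT; apply; apply/eqP; apply: ideal1T.
Qed.

Lemma proper_sub_M (I : {set R}) : is_ideal I -> 1 \notin I -> I \subset M.
Proof.
suff: forall k (I : {set R}), (#|R| - #|I| <= k)%N -> is_ideal I -> 1 \notin I -> I \subset M.
  by move=> /(_ #|R| I); apply; rewrite leq_subr.
elim => [|k IH] J hk hJ h1; (case: (classic (is_maximal_ideal J)) => [hm|hnm];
  [by rewrite ((hF.1 J).1 hm) | ]);
  (have hJT : J != setT by apply/negP => /eqP hJT; move/negP: h1; apply; rewrite hJT inE);
  (have [K hK] : exists K, ~ (is_ideal K -> J \subset K -> K = J \/ K = setT)
    by apply: not_all_ex_not => hall; apply: hnm; split => //);
  (have [hKi [hJK hor]] : is_ideal K /\ J \subset K /\ ~ (K = J \/ K = setT) by tauto);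
  (have hKJ : K <> J by tauto); (have hKT : K <> setT by tauto);
  (have h1K : 1 \notin K by apply/negP => hh; apply: hKT; apply: ideal1T);
  (have hpr : J \proper K by rewrite properEneq hJK andbT; apply/eqP => e; apply: hKJ);
  have hc := proper_card hpr; have hcK : (#|K| <= #|R|)%N by apply: max_card.
- exfalso; lia.
- have /IH : (#|R| - #|K| <= k)%N by lia.
  by move=> /(_ hKi h1K); apply: subset_trans.
Qed.

Lemma nonunit_in_M x : x \isn't a GRing.unit -> x \in M.
Proof.
move=> hx.
pose I := [set r * x | r : R].
have hI : is_ideal I.
  split; first by apply/imsetP; exists 0; rewrite ?mul0r.
  split.
    by move=> a b /imsetP [r _ ->] /imsetP [r' _ ->]; apply/imsetP; exists (r + r'); rewrite ?mulrDl.
  by move=> a b /imsetP [r' _ ->]; apply/imsetP; exists (a * r'); rewrite ?mulrA.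
have h1 : 1 \notin I.
  apply/negP => /imsetP [r _ e]; move/negP: hx; apply; apply/unitrPr; exists r.
  by rewrite mulrC e.
have := subsetP (proper_sub_M _ hI h1) x; apply; apply/imsetP; exists 1 => //; by rewrite mul1r.
Qed.

Lemma M_nilp m : m \in M -> exists k, m ^+ k = 0.
Proof.
move=> hm.
pose f := fun i : 'I_(#|R|.+1) => m ^+ i.
have : ~ injective f.
  move=> hinj; have := leq_card _ hinj; rewrite card_ord ltnn; done.
move=> /not_all_ex_not [i /not_all_ex_not [j hij]].
have [e hne] : f i = f j /\ i <> j by tauto.
have hne' : (i : nat) <> j by move=> hh; apply: hne; apply: val_inj.
have [i' [j' [hlt e']]] : exists a b : nat, (a < b)%N /\ m ^+ a = m ^+ b.
  by case: (ltngtP i j) => h; [exists i, j | exists j, i | exfalso; apply: hne'].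
clear e hne hne' hij i j; move: i' j' hlt e' => i j hlt e.
exists i.
have e2 : m ^+ i * (1 - m ^+ (j - i)) = 0.
  by rewrite mulrBr mulr1 -exprD subnKC ?(ltnW hlt) // e subrr.
case: (boolP ((1 - m ^+ (j - i)) \is a GRing.unit)) => hu.
  by rewrite -(mulrK hu (m ^+ i)) e2 mul0r.
exfalso; have hu' := nonunit_in_M _ hu.
have hmd : m ^+ (j - i) \in M.
  have [hI [hD hM]] := M_max.1.
  have -> : (j - i = (j - i).-1.+1)%N by lia.
  by rewrite exprSr; apply: hM.
have [_ [hD _]] := M_max.1.
move: (hD _ _ hu' hmd); rewrite subrK => h1.
by move/negP: one_notin_M.
Qed.

Lemma soc_elem : exists s, s \in ann M /\ s != 0.
Proof.
have [_ [hne _]] := hF.2.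
case: (boolP [exists s, (s \in ann M) && (s != 0)]).
  by move=> /existsP [s /andP [h1 h2]]; exists s.
move=> /existsPn hall; exfalso; move/negP: hne; apply; apply/eqP/setP => x.
apply/idP/idP.
  by move=> hx; rewrite inE; have := hall x; rewrite hx /= negbK.
rewrite inE => /eqP ->; rewrite inE; apply/forallP => y; apply/implyP => _; by rewrite mul0r.
Qed.

Lemma ann_mul s r : s \in ann M -> r \in M -> r * s = 0.
Proof. by rewrite inE => /forallP /(_ r) /implyP h hr; rewrite mulrC; apply/eqP; apply: h. Qed.

Lemma soc_gen s : s \in ann M -> s != 0 -> forall t, t \in ann M -> exists r, t = r * s.
Proof.
move=> hs hs0 t ht.
pose I := [set r * s | r : R].
have hI : is_ideal I.
  split; first by apply/imsetP; exists 0; rewrite ?mul0r.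
  split.
    by move=> a b /imsetP [r _ ->] /imsetP [r' _ ->]; apply/imsetP; exists (r + r'); rewrite ?mulrDl.
  by move=> a b /imsetP [r' _ ->]; apply/imsetP; exists (a * r'); rewrite ?mulrA.
have hsub : I \subset ann M.
  apply/subsetP => x /imsetP [r _ ->]; rewrite inE; apply/forallP => y; apply/implyP => hy.
  by rewrite -mulrA [s * y]mulrC (ann_mul _ _ hs hy) mulr0.
have [_ [_ hmin]] := hF.2.
case: (hmin I hI hsub) => e.
  exfalso; have : s \in I by apply/imsetP; exists 1; rewrite ?mul1r ?inE.
  by rewrite e inE; apply/negP.
by move: ht; rewrite -e => /imsetP [r _ ->]; exists r.
Qed.


Section Mod.
Variable n : nat.
Local Notation V := 'rV[R]_n.

Definition linb (B : {set V}) (f : {ffun V -> R}) : bool :=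
 [forall x, forall y, (x \in B) ==> (y \in B) ==> (f (x + y) == f x + f y)] &&
 [forall r, forall x, (x \in B) ==> (f (r *: x) == r * f x)] &&
 [forall x, (x \notin B) ==> (f x == 0)].

Definition Fset (B A : {set V}) := [set f | linb B f && [forall x in A, f x == 0]].

Lemma linbP (B : {set V}) (f : {ffun V -> R}) : reflect
  [/\ forall x y, x \in B -> y \in B -> f (x + y) = f x + f y,
      forall r x, x \in B -> f (r *: x) = r * f x &
      forall x, x \notin B -> f x = 0] (linb B f).
Proof.
apply: (iffP idP).
  move=> /andP [/andP [/forallP h1 /forallP h2] /forallP h3]; split.
  - by move=> x y hx hy; apply/eqP; move: (h1 x) => /forallP /(_ y); rewrite hx hy.
  - by move=> r x hx; apply/eqP; move: (h2 r) => /forallP /(_ x); rewrite hx.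
  - by move=> x hx; apply/eqP; move: (h3 x); rewrite hx.
move=> [h1 h2 h3]; apply/andP; split; first (apply/andP; split).
- by apply/forallP => x; apply/forallP => y; apply/implyP => hx; apply/implyP => hy; rewrite h1.
- by apply/forallP => r; apply/forallP => x; apply/implyP => hx; rewrite h2.
- by apply/forallP => x; apply/implyP => hx; rewrite h3.
Qed.

Lemma FsetP (B A : {set V}) (f : {ffun V -> R}) : reflect
  ([/\ forall x y, x \in B -> y \in B -> f (x + y) = f x + f y,
      forall r x, x \in B -> f (r *: x) = r * f x &
      forall x, x \notin B -> f x = 0] /\ forall x, x \in A -> f x = 0) (f \in Fset B A).
Proof.
rewrite inE; apply: (iffP andP).
  by move=> [/linbP h /forallP h2]; split => // x hx; apply/eqP; move: (h2 x); rewrite hx.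
by move=> [h h2]; split; [apply/linbP | apply/forallP => x; apply/implyP => hx; rewrite h2].
Qed.

Lemma lc_sub (C : {set V}) x y : is_linear_code C -> x \in C -> y \in C -> x - y \in C.
Proof.
move=> [h0 [hD hZ]] hx hy; rewrite -scaleN1r; apply: hD => //; exact: hZ.
Qed.

Definition Ib (A : {set V}) b := [set r : R | r *: b \in A].

Lemma Ib_ideal (A : {set V}) b : is_linear_code A -> is_ideal (Ib A b).
Proof.
move=> [h0 [hD hZ]]; split; first by rewrite inE scale0r.
split; first by move=> x y; rewrite !inE scalerDl; apply: hD.
by move=> r x; rewrite !inE -scalerA; apply: hZ.
Qed.

Lemma nilp_contra (A : {set V}) b m : is_linear_code A -> m \in M -> b \notin A ->
  m *: b \notin A -> Ib A (m *: b) \subset Ib A b -> False.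
Proof.
move=> hA hm hbA hmb hsub2.
have [K hK] := M_nilp _ hm.
have : forall j, m ^+ j *: b \notin A.
  elim => [|j IHj]; first by rewrite expr0 scale1r.
  rewrite exprSr -scalerA; apply/negP => hj.
  have : m ^+ j \in Ib A (m *: b) by rewrite inE.
  by move=> /(subsetP hsub2); rewrite inE; apply/negP.
by move=> /(_ K); rewrite hK scale0r hA.1.
Qed.

Lemma good_b (A B : {set V}) b0 : is_linear_code A -> is_linear_code B ->
  b0 \in B -> b0 \notin A ->
  exists b, [/\ b \in B, b \notin A & forall m, m \in M -> m *: b \in A].
Proof.
move=> hA hB.
suff: forall k b, (#|R| - #|Ib A b| <= k)%N -> b \in B -> b \notin A ->
  exists b, [/\ b \in B, b \notin A & forall m, m \in M -> m *: b \in A].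
  by move=> /(_ #|R| b0); apply; rewrite leq_subr.
elim => [|k IH] b hk hbB hbA;
 (case: (boolP [forall m in M, m *: b \in A]) => [/forallP h | /forallPn [m]];
  [by exists b; split => // m hm; move: (h m); rewrite hm |
   rewrite negb_imply => /andP [hm hmb]]);
 (have hsub : Ib A b \subset Ib A (m *: b)
   by apply/subsetP => r; rewrite !inE scalerA mulrC -scalerA => hr; apply hA.2.2);
 (case: (boolP (Ib A (m *: b) \subset Ib A b)) => hsub2;
 [ exfalso; exact: (nilp_contra _ _ _ hA hm hbA hmb hsub2)
 | ]);
 (have hpr : Ib A b \proper Ib A (m *: b) by rewrite properE hsub hsub2);
 have hc := proper_card hpr; have hcK : (#|Ib A (m *: b)| <= #|R|)%N by apply: max_card.
- exfalso; lia.
- apply: (IH (m *: b)) => //; first lia.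
  by apply: hB.2.2.
Qed.

Lemma key_triv (A B : {set V}) : A \subset B -> B \subset A -> (#|Fset B A| * #|A| <= #|B|)%N.
Proof.
move=> hAB hBA.
have hF0 : Fset B A \subset [set 0 : {ffun V -> R}].
  apply/subsetP => f /FsetP [[_ _ h3] h4]; rewrite inE; apply/eqP/ffunP => x; rewrite ffunE.
  case: (boolP (x \in B)) => hx; [apply: h4; exact: (subsetP hBA) | exact: h3].
have := subset_leq_card hF0; rewrite cards1 => h1.
have h2 := subset_leq_card hAB.
apply: leq_trans (leq_mul h1 (leqnn _)) _; by rewrite mul1n.
Qed.

Lemma key_step (A B : {set V}) : is_linear_code A -> is_linear_code B -> A \subset B ->
  ~~ (B \subset A) ->
  (forall A', is_linear_code A' -> A' \subset B -> (#|A| < #|A'|)%N ->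
      (#|Fset B A'| * #|A'| <= #|B|)%N) ->
  (#|Fset B A| * #|A| <= #|B|)%N.
Proof.
move=> hA hB hAB hBA IH.
have [b0 hb0B hb0A] := subsetPn hBA.
have [b [hbB hbA hMb]] := good_b _ _ _ hA hB hb0B hb0A.
set A' := [set x | [exists r : R, x - r *: b \in A]].
have memA' x : reflect (exists r, x - r *: b \in A) (x \in A') by rewrite inE; apply: existsP.
have hA'B : A' \subset B.
  apply/subsetP => x /memA' [r hr].
  have -> : x = (x - r *: b) + r *: b by rewrite subrK.
  apply: hB.2.1; [exact: (subsetP hAB) | exact: hB.2.2].
have hAA' : A \subset A'.
  by apply/subsetP => x hx; apply/memA'; exists 0; rewrite scale0r subr0.
have hbA' : b \in A' by apply/memA'; exists 1; rewrite scale1r subrr hA.1.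
have hpr : A \proper A' by apply/properP; split => //; exists b.
have hc := proper_card hpr.
have hA'lc : is_linear_code A'.
  split; first (apply/memA'; exists 0; by rewrite scale0r subr0 hA.1).
  split.
    move=> x y /memA' [r hr] /memA' [r' hr']; apply/memA'; exists (r + r').
    have -> : x + y - (r + r') *: b = (x - r *: b) + (y - r' *: b)
      by rewrite scalerDl opprD addrACA.
    by apply: hA.2.1.
  move=> t x /memA' [r hr]; apply/memA'; exists (t * r).
  have -> : t *: x - (t * r) *: b = t *: (x - r *: b) by rewrite scalerBr scalerA.
  by apply: hA.2.2.
have hIH := IH A' hA'lc hA'B hc.
have [s [hs hs0]] := soc_elem.
have h1 : (#|Fset B A| <= #|ann M| * #|Fset B A'|)%N.
  pose g0 := fun t => odflt 0 [pick g in Fset B A | g b == t].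
  pose h := fun f : {ffun V -> R} => (f b, f - g0 (f b)).
  have hg0 : forall f, f \in Fset B A -> g0 (f b) \in Fset B A /\ g0 (f b) b = f b.
    move=> f hf; rewrite /g0; case: pickP => [g /andP [hg /eqP e] | /(_ f)] //.
    by rewrite hf eqxx.
  have hinj : {in Fset B A &, injective h}.
    by move=> f f' hf hf' [e1 e2]; move: e2; rewrite e1; apply: addIr.
  rewrite -(card_in_imset hinj) -cardsX; apply: subset_leq_card.
  apply/subsetP => p /imsetP [f hf ->]; rewrite inE /=; apply/andP; split.
    rewrite inE; apply/forallP => m; apply/implyP => hm.
    move/FsetP: (hf) => [[f1 f2 f3] f4].
    by rewrite mulrC -(f2 m b hbB) f4 ?hMb.
  have [hg hgb] := hg0 f hf.
  move/FsetP: hf => [[f1 f2 f3] f4]; move/FsetP: hg => [[g1 g2 g3] g4].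
  apply/FsetP; split; first split.
  - by move=> x y hx hy; rewrite !ffunE (f1 x y hx hy) (g1 x y hx hy) opprD addrACA.
  - by move=> r x hx; rewrite !ffunE (f2 r x hx) (g2 r x hx) mulrBr.
  - by move=> x hx; rewrite !ffunE (f3 x hx) (g3 x hx) subrr.
  - move=> x /memA' [r hr].
    have hxb : x = (x - r *: b) + r *: b by rewrite subrK.
    have ha : x - r *: b \in B by exact: (subsetP hAB).
    have hrb : r *: b \in B by exact: hB.2.2.
    move: hr ha hxb; set a := x - r *: b => hr ha hxb.
    by rewrite !ffunE hxb (f1 _ _ ha hrb) (g1 _ _ ha hrb) (f2 r b hbB) (g2 r b hbB) (f4 a hr) (g4 a hr) hgb subrr.
have h2 : (#|ann M| * #|A| <= #|A'|)%N.
  pose rho := fun t => odflt 0 [pick r | r * s == t].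
  have hrho : forall t, t \in ann M -> rho t * s = t.
    move=> t ht; rewrite /rho; case: pickP => [r /eqP -> // | ].
    by have [r e] := soc_gen _ hs hs0 t ht; move=> /(_ r); rewrite -e eqxx.
  pose kk := fun p : R * V => p.2 + rho p.1 *: b.
  have hIb : Ib A b \subset M.
    by apply: proper_sub_M; [apply: Ib_ideal | rewrite inE scale1r].
  have hinj : {in setX (ann M) A &, injective kk}.
    move=> [t a] [t' a'] /setXP [ht ha] /setXP [ht' ha'] /= e.
    have hd : (rho t - rho t') *: b \in A.
      have -> : (rho t - rho t') *: b = a' - a.
        by rewrite /kk /= in e; rewrite scalerBl; apply: (addrI a); rewrite addrA e addrK addrC subrK.
      exact: lc_sub.
    have hM : rho t - rho t' \in M by apply: (subsetP hIb); rewrite inE.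
    have es : t = t'.
      rewrite -(hrho t ht) -(hrho t' ht'); apply/eqP; rewrite -subr_eq0 -mulrBl.
      by apply/eqP; apply: ann_mul.
    by move: e; rewrite /kk /= es => /addIr ->.
  rewrite -cardsX -(card_in_imset hinj); apply: subset_leq_card.
  apply/subsetP => x /imsetP [[t a] /setXP [ht ha] ->]; apply/memA'; exists (rho t).
  by rewrite /kk /= addrK.
apply: leq_trans (leq_mul h1 (leqnn #|A|)) _.
rewrite -mulnA mulnCA; exact: leq_trans (leq_mul (leqnn _) h2) hIH.
Qed.

Lemma key (A B : {set V}) : is_linear_code A -> is_linear_code B -> A \subset B ->
  (#|Fset B A| * #|A| <= #|B|)%N.
Proof.
move=> hA hB hAB.
suff: forall k (A : {set V}), (#|B| - #|A| <= k)%N -> is_linear_code A -> A \subset B ->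
    (#|Fset B A| * #|A| <= #|B|)%N.
  by move=> /(_ #|B| A); apply => //; rewrite leq_subr.
clear hA hAB A; move=> k; elim: k => [|k IH] A hk hA hAB;
  (case: (boolP (B \subset A)) => hBA; first by apply: key_triv).
- exfalso; move/negP: hBA; apply.
  have [_ <-] := subset_leqif_card hAB.
  by apply/eqP; have := subset_leq_card hAB; lia.
- apply: key_step => // A' hA' hA'B hlt; apply: IH => //; lia.
Qed.

End Mod.

Section Dual.
Variable n : nat.
Local Notation V := 'rV[R]_n.

Definition dot (u c : V) : R := (u *m c^T) 0 0.
Lemma dotE (u c : V) : \sum_(j < n) u 0 j * c 0 j = dot u c.
Proof. by rewrite /dot !mxE; apply: eq_bigr => j _; rewrite mxE. Qed.

Lemma dot_dualP (C : {set V}) u : reflect (forall c, c \in C -> dot u c = 0) (u \in dual_code C).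
Proof.
rewrite inE; apply: (iffP forallP) => h c.
  by move=> hc; move: (h c); rewrite hc dotE => /eqP.
by apply/implyP => hc; rewrite dotE h.
Qed.

Lemma dotDl (u v c : V) : dot (u + v) c = dot u c + dot v c.
Proof. by rewrite /dot mulmxDl mxE. Qed.
Lemma dotBl (u v c : V) : dot (u - v) c = dot u c - dot v c.
Proof. by rewrite /dot mulmxBl !mxE. Qed.
Lemma dotZl r (u c : V) : dot (r *: u) c = r * dot u c.
Proof. by rewrite /dot -scalemxAl mxE. Qed.
Lemma dotDr (u c d : V) : dot u (c + d) = dot u c + dot u d.
Proof. by rewrite /dot linearD /= mulmxDr mxE. Qed.
Lemma dotZr r (u c : V) : dot u (r *: c) = r * dot u c.
Proof. by rewrite /dot linearZ /= -scalemxAr mxE. Qed.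
Lemma dot0r (u : V) : dot u 0 = 0.
Proof. by rewrite /dot linear0 mulmx0 mxE. Qed.
Lemma dot_delta j (c : V) : dot (delta_mx 0 j) c = c 0 j.
Proof. by rewrite /dot -rowE !mxE. Qed.

Lemma dual_lc (C : {set V}) : is_linear_code (dual_code C).
Proof.
split; first by apply/dot_dualP => c _; rewrite /dot mul0mx mxE.
split.
  by move=> x y /dot_dualP hx /dot_dualP hy; apply/dot_dualP => c hc; rewrite dotDl hx // hy // addr0.
by move=> r x /dot_dualP hx; apply/dot_dualP => c hc; rewrite dotZl hx // mulr0.
Qed.

Lemma setT_lc : is_linear_code [set: V].
Proof. by split; [rewrite inE | split => *; rewrite inE]. Qed.

Lemma set0_lc : is_linear_code [set 0 : V].
Proof.
split; first by rewrite inE.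
split; first by move=> x y; rewrite !inE => /eqP -> /eqP ->; rewrite addr0.
by move=> r x; rewrite !inE => /eqP ->; rewrite scaler0.
Qed.

Lemma duality (C : {set V}) : is_linear_code C -> (#|C| * #|dual_code C|)%N = #|V|.
Proof.
move=> hC; apply/eqP; rewrite eqn_leq; apply/andP; split.
- pose Psi := fun c : V => [ffun x : V => dot x c].
  have hinj : injective Psi.
    move=> c d e; apply/matrixP => i j; rewrite (ord1 i).
    by have := congr1 (fun f : {ffun V -> R} => f (delta_mx 0 j)) e; rewrite !ffunE !dot_delta.
  have hsub : Psi @: C \subset Fset n [set: V] (dual_code C).
    apply/subsetP => f /imsetP [c hc ->]; apply/FsetP; split; first split.
    + by move=> x y _ _; rewrite !ffunE dotDl.
    + by move=> r x _; rewrite !ffunE dotZl.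
    + by move=> x; rewrite inE.
    + by move=> x /dot_dualP hx; rewrite ffunE hx.
  have h1 := subset_leq_card hsub; rewrite card_imset // in h1.
  have h2 := key _ _ _ (dual_lc C) setT_lc (subsetT _).
  rewrite cardsT in h2.
  exact: leq_trans (leq_mul h1 (leqnn _)) h2.
- pose Phi := fun u : V => [ffun x : V => if x \in C then dot u x else 0].
  have hk := @card_ker _ _ [set: V] (dual_code C) Phi (fun x y _ _ => in_setT _) (subsetT _).
  rewrite cardsT in hk; rewrite hk //; last first.
    move=> x y _ _; apply/eqP/dot_dualP => [e c hc | h].
      have := congr1 (fun f : {ffun V -> R} => f c) e; rewrite !ffunE hc => e'.
      by rewrite dotBl e' subrr.
    apply/ffunP => z; rewrite !ffunE; case: ifP => // hz; apply/eqP.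
    by rewrite -subr_eq0 -dotBl h.
  have hsub : Phi @: [set: V] \subset Fset n C [set 0 : V].
    apply/subsetP => f /imsetP [u _ ->]; apply/FsetP; split; first split.
    + by move=> x y hx hy; rewrite !ffunE hx hy hC.2.1 // dotDr.
    + by move=> r x hx; rewrite !ffunE hx hC.2.2 // dotZr.
    + by move=> x hx; rewrite ffunE (negbTE hx).
    + by move=> x; rewrite inE => /eqP ->; rewrite ffunE hC.1 dot0r.
  have h1 := subset_leq_card hsub.
  have h2 := key _ _ _ set0_lc hC (ltac:(by rewrite sub1set hC.1)); rewrite cards1 muln1 in h2.
  have h3 := leq_trans h1 h2.
  exact: leq_mul h3 (leqnn _).
Qed.

End Dual.

Section Main.
Variable n : nat.
Local Notation V := 'rV[R]_n.

Lemma GT0 k (G : 'M[R]_(k,n)) (h : V) : (h *m G^T == 0) = (h \in dual_code (rowspan G)).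
Proof.
apply/eqP/dot_dualP => [e c /imsetP [u _ ->] | hh].
  by rewrite /dot trmx_mul mulmxA e mul0mx mxE.
apply/matrixP => i j; rewrite (ord1 i) [RHS]mxE.
have hr : row j G \in rowspan G by apply/imsetP; exists (delta_mx 0 j) => //; rewrite rowE.
move: (hh _ hr); rewrite /dot tr_row colE mulmxA -colE => <-.
by rewrite [RHS]mxE.
Qed.

Lemma main_count k1 m2 (C1 C2 : {set V}) (G1 : 'M[R]_(k1,n)) (H2 : 'M[R]_(m2,n)) :
 is_linear_code C1 -> is_linear_code C2 -> rowspan G1 = C1 -> rowspan H2 = dual_code C2 ->
 #|C1| = (#|rowspan (H2 *m G1^T)| * #|C1 :&: C2|)%N.
Proof.
move=> h1 h2 hG hH.
pose S := (fun p : V * V => p.1 + p.2) @: setX C1 C2.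
have hS : is_linear_code S.
  split; first by apply/imsetP; exists (0,0); [rewrite in_setX h1.1 h2.1 | rewrite /= addr0].
  split.
    move=> x y /imsetP [[a b] /setXP [ha hb] ->] /imsetP [[a' b'] /setXP [ha' hb'] ->].
    apply/imsetP; exists (a + a', b + b') => /=; first by rewrite in_setX h1.2.1 // h2.2.1.
    by rewrite addrACA.
  move=> r x /imsetP [[a b] /setXP [ha hb] ->]; apply/imsetP; exists (r *: a, r *: b).
    by rewrite in_setX h1.2.2 // h2.2.2.
  by rewrite /= scalerDr.
have hdS : dual_code S = dual_code C1 :&: dual_code C2.
  apply/setP => u; rewrite in_setI; apply/dot_dualP/andP => [h | [/dot_dualP hu1 /dot_dualP hu2]].
    split; apply/dot_dualP => c hc; apply: h; apply/imsetP.
      by exists (c, 0); rewrite ?in_setX ?hc ?h2.1 //= addr0.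
    by exists (0, c); rewrite ?in_setX ?hc ?h1.1 //= add0r.
  move=> c /imsetP [[a b] /setXP [ha hb] ->]; by rewrite dotDr hu1 // hu2 // addr0.
have hsum : (#|C1| * #|C2| = #|S| * #|C1 :&: C2|)%N.
  rewrite -cardsX; apply: card_fib => - [p1 p2] /setXP [hp1 hp2].
  have -> : [set y in setX C1 C2 | y.1 + y.2 == (p1, p2).1 + (p1, p2).2]
      = (fun z => (p1 + z, p2 - z)) @: (C1 :&: C2).
    apply/setP => - [y1 y2]; rewrite inE in_setX /=; apply/andP/imsetP.
    - move=> [/andP [hy1 hy2] /eqP e].
      have e' : y1 - p1 = p2 - y2.
        by rewrite -[y1](addrK y2) e addrAC [p1 + p2]addrC addrK.
      exists (y1 - p1).
        by rewrite inE (lc_sub _ _ _ _ h1 hy1 hp1) e' (lc_sub _ _ _ _ h2 hp2 hy2).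
      congr pair; first by rewrite addrC subrK.
      by rewrite e' opprB addrC subrK.
    - move=> [z /setIP [hz1 hz2] [-> ->]].
      rewrite (h1.2.1 _ _ hp1 hz1) (lc_sub _ _ _ _ h2 hp2 hz2) /=.
      by rewrite addrACA subrr addr0.
  by apply: card_imset => z z' [] /addrI.
have hd2 := duality _ _ h2.
have hdS' := duality _ _ hS.
have hker : #|dual_code C2| = (#|rowspan (H2 *m G1^T)| * #|dual_code C1 :&: dual_code C2|)%N.
  have -> : rowspan (H2 *m G1^T) = (fun h => h *m G1^T) @: dual_code C2.
    rewrite -hH /rowspan -imset_comp; apply: eq_imset => u /=; by rewrite mulmxA.
  apply: card_ker.
  - by move=> x y hx hy; apply: (dual_lc _ C2).2.1.
  - by apply: subsetIr.
  - move=> x y hx hy; rewrite -subr_eq0 -mulmxBl GT0 hG in_setI.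
    by rewrite (lc_sub _ _ _ _ (dual_lc _ C2) hy hx) andbT.
rewrite -hdS in hker.
have hds0 : (0 < #|dual_code S|)%N by apply/card_gt0P; exists 0; exact: (dual_lc _ S).1.
have hc20 : (0 < #|C2|)%N by apply/card_gt0P; exists 0; exact: h2.1.
have e1 : (#|C2| * #|rowspan (H2 *m G1^T)|)%N = #|S|.
  apply/eqP; rewrite -(eqn_pmul2r hds0) -mulnA -hker hd2 hdS'.
  done.
apply/eqP; rewrite -(eqn_pmul2r hc20) hsum -e1; apply/eqP; lia.
Qed.

End Main.
End RingFacts.

Lemma logq_mul q a b : (0 < a)%N -> (0 < b)%N ->
  logq q (a * b) = Rdefinitions.Rplus (logq q a) (logq q b).
Proof.
move=> ha hb; rewrite /logq RIneq.mult_INR Rpower.ln_mult.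
- by rewrite RIneq.Rdiv_plus_distr.
- by apply: RIneq.lt_0_INR; apply/ltP.
- by apply: RIneq.lt_0_INR; apply/ltP.
Qed.

Lemma rowspan_gt0 (R : finComUnitRingType) k n (A : 'M[R]_(k, n)) : (0 < #|rowspan A|)%N.
Proof. by apply/card_gt0P; exists 0; apply/imsetP; exists 0 => //; rewrite mul0mx. Qed.

Lemma capgt0 (R : finComUnitRingType) n (C1 C2 : {set 'rV[R]_n}) :
  is_linear_code C1 -> is_linear_code C2 -> (0 < #|C1 :&: C2|)%N.
Proof. by move=> h1 h2; apply/card_gt0P; exists 0; rewrite inE h1.1 h2.1. Qed.

Theorem theorem3p10 (R : finComUnitRingType) (M : {set R}) (q : nat)
  (hFrob : local_frobenius M)
  (hq : #|[set: R]| = (q * #|M|)%N)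
  (l n k1 k2 m1 m2 : nat)
  (C1 C2 : {set 'rV[R]_n})
  (G1 : 'M[R]_(k1, n)) (G2 : 'M[R]_(k2, n))
  (H1 : 'M[R]_(m1, n)) (H2 : 'M[R]_(m2, n))
  (hC1 : is_linear_code C1) (hC2 : is_linear_code C2)
  (hG1 : is_generator_matrix G1 C1) (hG2 : is_generator_matrix G2 C2)
  (hH1 : is_parity_check_matrix H1 C1) (hH2 : is_parity_check_matrix H2 C2) :
  DLIP q l C1 C2 <->
  (Rankq q (mulmx H2 (trmx G1)) = Rminus (Rankq q G1) (INR l) \/
   Rankq q (mulmx H1 (trmx G2)) = Rminus (Rankq q G2) (INR l)).
Proof.
have e1 := main_count _ _ hFrob _ _ _ _ _ _ _ hC1 hC2 hG1 hH2.
have e2 := main_count _ _ hFrob _ _ _ _ _ _ _ hC2 hC1 hG2 hH1.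
rewrite setIC in e2.
rewrite /DLIP /dimq /Rankq.
rewrite /is_generator_matrix in hG1 hG2.
rewrite hG1 hG2 e1 e2 !logq_mul ?rowspan_gt0 ?capgt0 //.
split => [h | [h | h]]; [left | | ]; lra.
Qed.
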